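(* Let $G$ be a locally Hausdorff, locally compact groupoid and $X$ a locally Hausdorff, locally compact proper (left) $G$-space, with orbit map $q:X\to G\backslash X$. Then $G\backslash X$ is locally Hausdorff and locally compact. More precisely, if $C$ is a compact subset of $X$ that has a compact Hausdorff neighborhood $K$, then $q(C)$ is Hausdorff in $G\backslash X$.
   Context: A locally Hausdorff, locally compact groupoid: groupoid operations continuous, $G^{(0)}$ Hausdorff, each point has a compact Hausdorff neighborhood, range map open. A locally Hausdorff, locally compact space: every point has a compact Hausdorff neighborhood (compact means finite-subcover property only). For a left $G$-action on $X$ with anchor $r:X\to G^{(0)}$, let $G*X=\{(\gamma,x):s(\gamma)=r(x)\}$ and $\Theta(\gamma,x)=(\gamma\cdot x,x)$; $X$ is proper if $\Theta$ is a proper map (equivalently, $\Theta^{-1}(W)$ is compact for every compact $W\subset X\times X$). $G\backslash X$ is the orbit space with the quotient topology. *)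

(* Defs.v *)
From Stdlib Require Import List.
Set Implicit Arguments.
Unset Strict Implicit.

Definition set (X : Type) := X -> Prop.

Record topology (X : Type) := Topology {
  open : set X -> Prop;
  open_full : open (fun _ => True);
  open_inter : forall U V, open U -> open V -> open (fun x => U x /\ V x);
  open_union : forall F : set (set X), (forall U, F U -> open U) ->
                 open (fun x => exists U, F U /\ U x)
}.

Definition prod_open {X Y : Type} (opX : set X -> Prop) (opY : set Y -> Prop)
  (W : set (X * Y)) : Prop :=
  forall p, W p -> exists U V, opX U /\ opY V /\ U (fst p) /\ V (snd p) /\
     (forall q, U (fst q) -> V (snd q) -> W q).

(* A subset A is compact: every cover of A by open sets has a finite subcover
   (no Hausdorff assumption). *)
Definition compact {X : Type} (op : set X -> Prop) (A : set X) : Prop :=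
  forall F : set (set X), (forall U, F U -> op U) ->
    (forall x, A x -> exists U, F U /\ U x) ->
    exists l : list (set X), (forall U, In U l -> F U) /\
      (forall x, A x -> exists U, In U l /\ U x).

Definition hausdorff {X : Type} (op : set X -> Prop) (A : set X) : Prop :=
  forall x y, A x -> A y -> x <> y ->
    exists U V, op U /\ op V /\ U x /\ V y /\
      (forall z, A z -> U z -> V z -> False).

Definition nbhd {X : Type} (op : set X -> Prop) (K A : set X) : Prop :=
  exists U, op U /\ (forall x, A x -> U x) /\ (forall x, U x -> K x).

Definition loc_compact_loc_hausdorff {X : Type} (op : set X -> Prop) : Prop :=
  forall x, exists K, nbhd op K (fun y => y = x) /\ compact op K /\ hausdorff op K.

Definition continuous {X Y : Type} (opX : set X -> Prop) (opY : set Y -> Prop)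
  (f : X -> Y) : Prop :=
  forall V, opY V -> opX (fun x => V (f x)).

Definition continuous_on {X Y : Type} (opX : set X -> Prop) (opY : set Y -> Prop)
  (A : set X) (f : X -> Y) : Prop :=
  forall V, opY V -> exists U, opX U /\ (forall x, A x -> (U x <-> V (f x))).

Definition open_map {X Y : Type} (opX : set X -> Prop) (opY : set Y -> Prop)
  (f : X -> Y) : Prop :=
  forall U, opX U -> opY (fun y => exists x, U x /\ f x = y).

Definition image {X Y : Type} (f : X -> Y) (A : set X) : set Y :=
  fun y => exists x, A x /\ f x = y.

(* The unit space G0 is a separate space embedded in G
   by gunit; since grng o gunit = id and both are continuous, G0 carries the
   relative topology of its image. Multiplication gmul is total but only
   meaningful on composable pairs (gsrc g = grng h). *)
Record groupoid := Groupoid {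
  gG : Type;
  gG0 : Type;
  tG : topology gG;
  tG0 : topology gG0;
  gsrc : gG -> gG0;
  grng : gG -> gG0;
  gunit : gG0 -> gG;
  gmul : gG -> gG -> gG;
  ginv : gG -> gG;
  gsrc_mul : forall g h, gsrc g = grng h -> gsrc (gmul g h) = gsrc h;
  grng_mul : forall g h, gsrc g = grng h -> grng (gmul g h) = grng g;
  gmulA : forall g h k, gsrc g = grng h -> gsrc h = grng k ->
            gmul (gmul g h) k = gmul g (gmul h k);
  gsrc_unit : forall x, gsrc (gunit x) = x;
  grng_unit : forall x, grng (gunit x) = x;
  gmul_unitl : forall g, gmul (gunit (grng g)) g = g;
  gmul_unitr : forall g, gmul g (gunit (gsrc g)) = g;
  gsrc_inv : forall g, gsrc (ginv g) = grng g;
  grng_inv : forall g, grng (ginv g) = gsrc g;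
  gmul_invr : forall g, gmul g (ginv g) = gunit (grng g);
  gmul_invl : forall g, gmul (ginv g) g = gunit (gsrc g);
  gsrc_cont : continuous (open tG) (open tG0) gsrc;
  grng_cont : continuous (open tG) (open tG0) grng;
  gunit_cont : continuous (open tG0) (open tG) gunit;
  ginv_cont : continuous (open tG) (open tG) ginv;
  gmul_cont : continuous_on (prod_open (open tG) (open tG)) (open tG)
                (fun p => gsrc (fst p) = grng (snd p))
                (fun p => gmul (fst p) (snd p))
}.

Definition lclh_groupoid (G : groupoid) : Prop :=
  hausdorff (open (tG0 G)) (fun _ => True) /\
  loc_compact_loc_hausdorff (open (tG G)) /\
  open_map (open (tG G)) (open (tG0 G)) (@grng G).

Record gspace (G : groupoid) := GSpace {
  sX : Type;
  tX : topology sX;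
  sanchor : sX -> gG0 G;
  sact : gG G -> sX -> sX;
  sanchor_act : forall g x, gsrc g = sanchor x -> sanchor (sact g x) = grng g;
  sact_unit : forall x, sact (gunit (sanchor x)) x = x;
  sact_mul : forall g h x, gsrc g = grng h -> gsrc h = sanchor x ->
               sact (gmul g h) x = sact g (sact h x);
  sanchor_cont : continuous (open tX) (open (tG0 G)) sanchor;
  sact_cont : continuous_on (prod_open (open (tG G)) (open tX)) (open tX)
                (fun p => gsrc (fst p) = sanchor (snd p))
                (fun p => sact (fst p) (snd p))
}.

Arguments sX {G}. Arguments tX {G}. Arguments sanchor {G}. Arguments sact {G}.
Unset Implicit Arguments.

Definition GstarX {G : groupoid} (X : gspace G) : set (gG G * sX X) :=
  fun p => gsrc (fst p) = sanchor X (snd p).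

Definition Theta {G : groupoid} (X : gspace G) (p : gG G * sX X) : sX X * sX X :=
  (sact X (fst p) (snd p), snd p).

Definition proper_action {G : groupoid} (X : gspace G) : Prop :=
  forall W, compact (prod_open (open (tX X)) (open (tX X))) W ->
    compact (prod_open (open (tG G)) (open (tX X)))
      (fun p => GstarX X p /\ W (Theta X p)).

Definition orbit {G : groupoid} (X : gspace G) (x : sX X) : set (sX X) :=
  fun y => exists g, gsrc g = sanchor X x /\ sact X g x = y.

Definition orbit_space {G : groupoid} (X : gspace G) : Type :=
  { S : set (sX X) | exists x, S = orbit X x }.

Definition orbit_map {G : groupoid} (X : gspace G) (x : sX X) : orbit_space X :=
  exist _ (orbit X x) (ex_intro _ x eq_refl).

Definition quotient_open {G : groupoid} (X : gspace G) (V : set (orbit_space X)) : Prop :=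
  open (tX X) (fun x => V (orbit_map X x)).

(* Main.v *)
Require Import Defs.
From Stdlib Require Import List Classical FunctionalExtensionality PropExtensionality ProofIrrelevance.

Lemma open_local {X} (t : topology X) (Z : set X) :
  (forall z, Z z -> exists U, open t U /\ U z /\ (forall w, U w -> Z w)) -> open t Z.
Proof.
  intros H.
  assert (E : Z = (fun x => exists U, (fun U => open t U /\ (forall w, U w -> Z w)) U /\ U x)).
  { apply functional_extensionality; intro x; apply propositional_extensionality; split.
    - intro Hx. destruct (H x Hx) as [U [HU [Ux HZ]]]. exists U; auto.
    - intros [U [[_ HZ] Ux]]; auto. }
  rewrite E. apply open_union. intros U [HU _]; exact HU.
Qed.

Lemma open_list_union {X} (t : topology X) (l : list (set X)) :
  (forall U, In U l -> open t U) -> open t (fun z => exists U, In U l /\ U z).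
Proof. intros H. apply (open_union (F := fun U => In U l)). auto. Qed.

Lemma compact_closed_sub {X} (t : topology X) (K W : set X) :
  compact (open t) K -> open t W -> compact (open t) (fun z => K z /\ ~ W z).
Proof.
  intros HK HW F HF Hcov.
  destruct (HK (fun U => F U \/ U = W)) as [l [Hl Hlc]].
  - intros U [H|H]; [auto| subst; auto].
  - intros x Kx. destruct (classic (W x)) as [Wx|nWx].
    + exists W; auto.
    + destruct (Hcov x (conj Kx nWx)) as [U [FU Ux]]; eauto.
  - assert (Hind : forall l, (forall U, In U l -> F U \/ U = W) ->
       exists l2, (forall U, In U l2 -> F U) /\
         (forall x, ~ W x -> (exists U, In U l /\ U x) -> exists U, In U l2 /\ U x)).
    { induction l0 as [|U l0 IH]; intros Hl0.
      - exists nil; split; [simpl; tauto|]. intros x _ [U [[] _]].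
      - destruct IH as [l2 [H1 H2]]. { intros; apply Hl0; simpl; auto. }
        destruct (Hl0 U (or_introl eq_refl)) as [FU|EU].
        + exists (U :: l2); split.
          * intros V [<-|HV]; auto.
          * intros x nW [V [[<-|HV] Vx]].
            -- exists U; simpl; auto.
            -- destruct (H2 x nW (ex_intro _ V (conj HV Vx))) as [V' [? ?]]. exists V'; simpl; auto.
        + exists l2; split; auto.
          intros x nW [V [[<-|HV] Vx]].
          * subst; contradiction.
          * apply H2; eauto. }
    destruct (Hind l Hl) as [l2 [H1 H2]]. exists l2; split; auto.
    intros x [Kx nWx]. apply H2; auto.
Qed.

Lemma compact_image {X Y} (opX : set X -> Prop) (opY : set Y -> Prop) (f : X -> Y) A :
  continuous opX opY f -> compact opX A -> compact opY (image f A).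
Proof.
  intros Hf HA F HF Hcov.
  destruct (HA (fun O => exists U, F U /\ O = (fun x => U (f x)))) as [l [Hl Hlc]].
  - intros O [U [FU ->]]. apply Hf; auto.
  - intros x Ax. destruct (Hcov (f x) (ex_intro _ x (conj Ax eq_refl))) as [U [FU Ux]].
    exists (fun x => U (f x)); eauto.
  - assert (Hind : forall l, (forall O, In O l -> exists U, F U /\ O = (fun x => U (f x))) ->
      exists l2, (forall U, In U l2 -> F U) /\
        (forall x, (exists O, In O l /\ O x) -> exists U, In U l2 /\ U (f x))).
    { induction l0 as [|O l0 IH]; intros Hl0.
      - exists nil; split; [simpl; tauto|]. intros x [U [[] _]].
      - destruct IH as [l2 [H1 H2]]. { intros; apply Hl0; simpl; auto. }
        destruct (Hl0 O (or_introl eq_refl)) as [U [FU ->]].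
        exists (U :: l2); split.
        + intros V [<-|HV]; auto.
        + intros x [V [[<-|HV] Vx]].
          * exists U; simpl; auto.
          * destruct (H2 x (ex_intro _ V (conj HV Vx))) as [V' [? ?]]. exists V'; simpl; auto. }
    destruct (Hind l Hl) as [l2 [H1 H2]]. exists l2; split; auto.
    intros y [x [Ax <-]]. apply H2; auto.
Qed.

Lemma sep_point_compact {X} (t : topology X) (K D : set X) x :
  hausdorff (open t) K -> K x -> compact (open t) D -> (forall z, D z -> K z) -> ~ D x ->
  exists V W, open t V /\ open t W /\ V x /\ (forall z, D z -> W z) /\
    (forall z, K z -> V z -> W z -> False).
Proof.
  intros HK Kx HD DK nDx.
  destruct (HD (fun W => open t W /\ exists V, open t V /\ V x /\
                  (forall z, K z -> V z -> W z -> False))) as [l [Hl Hlc]].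
  - intros U [H _]; auto.
  - intros p Dp. assert (p <> x) by (intro; subst; contradiction).
    destruct (HK x p Kx (DK p Dp) (fun e => H (eq_sym e))) as [V [W [? [? [? [? Hd]]]]]].
    exists W; split; [split; auto; exists V; auto | auto].
  - assert (Hind : forall l, (forall W, In W l -> open t W /\ exists V, open t V /\ V x /\
                  (forall z, K z -> V z -> W z -> False)) ->
      exists V, open t V /\ V x /\ forall z, K z -> V z -> (exists W, In W l /\ W z) -> False).
    { induction l0 as [|W l0 IH]; intros Hl0.
      - exists (fun _ => True); split; [apply open_full|]. split; auto. intros z _ _ [U [[] _]].
      - destruct IH as [V1 [H1 [H2 H3]]]. { intros; apply Hl0; simpl; auto. }
        destruct (Hl0 W (or_introl eq_refl)) as [_ [V [HV [Vx Hd]]]].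
        exists (fun z => V z /\ V1 z); split; [apply open_inter; auto|]. split; [auto|].
        intros z Kz [Vz V1z] [U [[<-|HU] Uz]]; eauto. }
    destruct (Hind l Hl) as [V [HV [Vx Hd]]].
    exists V, (fun z => exists W, In W l /\ W z). split; auto. split.
    { apply open_list_union. intros; apply Hl; auto. }
    split; auto.
Qed.

Lemma compact_prod {X Y} (tx : topology X) (ty : topology Y) (A : set X) (B : set Y) :
  compact (open tx) A -> compact (open ty) B ->
  compact (prod_open (open tx) (open ty)) (fun p => A (fst p) /\ B (snd p)).
Proof.
  intros HA HB F HF Hcov.
  assert (Step1 : forall a, A a -> exists Ua, open tx Ua /\ Ua a /\ exists lo,
     (forall O, In O lo -> F O) /\ forall z w, Ua z -> B w -> exists O, In O lo /\ O (z, w)).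
  { intros a Aa.
    destruct (HB (fun V => open ty V /\ exists U O, open tx U /\ U a /\ F O /\
                 forall z w, U z -> V w -> O (z, w))) as [lb [Hlb Hlbc]].
    - intros V [H _]; auto.
    - intros w Bw. destruct (Hcov (a, w) (conj Aa Bw)) as [O [FO Ow]].
      destruct (HF O FO (a, w) Ow) as [U [V [HU [HV [Ua [Vw Hr]]]]]].
      exists V; split; auto. split; auto. exists U, O; repeat split; auto.
      all: try (intros z w' Uz Vw'; apply (Hr (z, w')); auto).
    - assert (Hind : forall lb, (forall V, In V lb -> open ty V /\ exists U O, open tx U /\ U a /\ F O /\
                 forall z w, U z -> V w -> O (z, w)) ->
        exists Ua, open tx Ua /\ Ua a /\ exists lo, (forall O, In O lo -> F O) /\
          forall z w, Ua z -> (exists V, In V lb /\ V w) -> exists O, In O lo /\ O (z, w)).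
      { induction lb0 as [|V lb0 IH]; intros Hl0.
        - exists (fun _ => True); split; [apply open_full|]. split; auto.
          exists nil; split; [simpl; tauto|]. intros z w _ [U [[] _]].
        - destruct IH as [Ua1 [H1 [H2 [lo1 [H3 H4]]]]]. { intros; apply Hl0; simpl; auto. }
          destruct (Hl0 V (or_introl eq_refl)) as [_ [U [O [HU [Ua [FO Hr]]]]]].
          exists (fun z => U z /\ Ua1 z); split; [apply open_inter; auto|]. split; [auto|].
          exists (O :: lo1); split.
          + intros O' [<-|HO']; auto.
          + intros z w [Uz U1z] [V' [[<-|HV'] V'w]].
            * exists O; simpl; auto.
            * destruct (H4 z w U1z (ex_intro _ V' (conj HV' V'w))) as [O' [? ?]].
              exists O'; simpl; auto. }
      destruct (Hind lb Hlb) as [Ua [H1 [H2 [lo [H3 H4]]]]].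
      exists Ua; split; auto; split; auto; exists lo; split; auto. }
  destruct (HA (fun U => open tx U /\ exists lo, (forall O, In O lo -> F O) /\
                  forall z w, U z -> B w -> exists O, In O lo /\ O (z, w))) as [lu [Hlu Hluc]].
  - intros U [H _]; auto.
  - intros a Aa. destruct (Step1 a Aa) as [Ua [H1 [H2 H3]]]. exists Ua; auto.
  - assert (Hind : forall lu, (forall U, In U lu -> open tx U /\ exists lo, (forall O, In O lo -> F O) /\
                  forall z w, U z -> B w -> exists O, In O lo /\ O (z, w)) ->
       exists lo, (forall O, In O lo -> F O) /\
         forall z w, (exists U, In U lu /\ U z) -> B w -> exists O, In O lo /\ O (z, w)).
    { induction lu0 as [|U lu0 IH]; intros Hl0.
      - exists nil; split; [simpl; tauto|]. intros z w [U [[] _]].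
      - destruct IH as [lo1 [H1 H2]]. { intros; apply Hl0; simpl; auto. }
        destruct (Hl0 U (or_introl eq_refl)) as [_ [lo [H3 H4]]].
        exists (lo ++ lo1); split.
        + intros O HO; apply in_app_or in HO; destruct HO; auto.
        + intros z w [U' [[<-|HU'] U'z]] Bw.
          * destruct (H4 z w U'z Bw) as [O [? ?]]. exists O; split; auto; apply in_or_app; auto.
          * destruct (H2 z w (ex_intro _ U' (conj HU' U'z)) Bw) as [O [? ?]].
            exists O; split; auto; apply in_or_app; auto. }
    destruct (Hind lu Hlu) as [lo [H1 H2]]. exists lo; split; auto.
    intros [z w] [Az Bw]. apply H2; auto.
Qed.

Lemma ginv_inv (G : groupoid) (g : gG G) : ginv (ginv g) = g.
Proof.
  rewrite <- (gmul_unitr (ginv (ginv g))).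
  assert (E1 : gsrc (ginv (ginv g)) = gsrc g) by (rewrite gsrc_inv, grng_inv; reflexivity).
  rewrite E1, <- gmul_invl.
  rewrite <- gmulA.
  - rewrite (gmul_invl (ginv g)), gsrc_inv. apply gmul_unitl.
  - rewrite E1, grng_inv; reflexivity.
  - rewrite gsrc_inv; reflexivity.
Qed.

Lemma sig_eq {A} (P : A -> Prop) a b pa pb : a = b -> exist P a pa = exist P b pb.
Proof. intros ->. f_equal. apply proof_irrelevance. Qed.

Lemma orbit_act {G : groupoid} (X : gspace G) g z :
  gsrc g = sanchor X z -> orbit_map X (sact X g z) = orbit_map X z.
Proof.
  intros Hg. unfold orbit_map. apply sig_eq.
  apply functional_extensionality; intro y; apply propositional_extensionality.
  unfold orbit; split.
  - intros [h [Hh <-]]. rewrite (sanchor_act Hg) in Hh.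
    exists (gmul h g). split.
    + rewrite gsrc_mul; auto.
    + apply sact_mul; auto.
  - intros [h [Hh <-]]. exists (gmul h (ginv g)). split.
    + rewrite gsrc_mul, gsrc_inv, (sanchor_act Hg); auto.
      rewrite grng_inv; congruence.
    + assert (Hc : gsrc (ginv g) = sanchor X (sact X g z)) by (rewrite gsrc_inv, (sanchor_act Hg); auto).
      rewrite (sact_mul (x := sact X g z) (g := h) (h := ginv g)); [| rewrite grng_inv; congruence | exact Hc].
      assert (Hc2 : gsrc (ginv g) = grng g) by apply gsrc_inv.
      rewrite <- (sact_mul (x := z) Hc2 Hg).
      rewrite gmul_invl, Hg, sact_unit; auto.
Qed.

Lemma orbit_eq {G : groupoid} (X : gspace G) a b :
  orbit_map X a = orbit_map X b -> exists g, gsrc g = sanchor X b /\ sact X g b = a.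
Proof.
  intros E. assert (E' : orbit X a = orbit X b) by (apply (f_equal (@proj1_sig _ _)) in E; exact E).
  assert (H : orbit X a a) by (exists (gunit (sanchor X a)); rewrite gsrc_unit; split; auto; apply sact_unit).
  rewrite E' in H. exact H.
Qed.

Lemma saturation_open {G : groupoid} (X : gspace G) (A : set (sX X)) :
  lclh_groupoid G -> open (tX X) A -> quotient_open X (image (orbit_map X) A).
Proof.
  intros [_ [_ Hrng]] HA. unfold quotient_open. apply open_local.
  intros z0 [a0 [Aa0 Eq]].
  destruct (orbit_eq X a0 z0 (eq_sym (eq_sym Eq))) as [g0 [Hg0 Ea]].
  destruct (sact_cont HA) as [O [HO HOe]].
  assert (Og0 : O (g0, z0)) by (apply (HOe (g0, z0)); simpl; auto; rewrite Ea; auto).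
  destruct (HO _ Og0) as [P [Q [HP [HQ [Pg [Qz Hr]]]]]]. simpl in Pg, Qz.
  set (Oo := fun u => exists h, P (ginv h) /\ grng h = u).
  assert (HOo : open (tG0 G) Oo).
  { apply (Hrng (fun h => P (ginv h))). apply ginv_cont; auto. }
  exists (fun z => Q z /\ Oo (sanchor X z)). split.
  { apply open_inter; auto. apply (sanchor_cont X). auto. }
  split.
  { split; auto. exists (ginv g0). rewrite ginv_inv, grng_inv; auto. }
  intros z [Qz' [h [Ph Eh]]].
  assert (Hs : gsrc (ginv h) = sanchor X z) by (rewrite gsrc_inv; auto).
  exists (sact X (ginv h) z). split.
  - apply (HOe (ginv h, z)); [exact Hs | apply (Hr (ginv h, z)); auto].
  - apply orbit_act; auto.
Qed.

Lemma part2 (G : groupoid) (X : gspace G) :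
  lclh_groupoid G -> proper_action X ->
  forall C K : set (sX X),
     nbhd (open (tX X)) K C -> compact (open (tX X)) K -> hausdorff (open (tX X)) K ->
     hausdorff (quotient_open X) (image (orbit_map X) C).
Proof.
  intros HG Hpr C K [U [HU [CU UK]]] HK HH.
  intros Sx Sy [x [Cx <-]] [y [Cy <-]] Hne.
  assert (Kx : K x) by auto. assert (Ky : K y) by auto.
  pose proof (Hpr (fun w => K (fst w) /\ K (snd w)) (compact_prod (tX X) (tX X) K K HK HK)) as HP.
  set (F := fun O : set (gG G * sX X) => prod_open (open (tG G)) (open (tX X)) O /\
     ((exists V W, open (tX X) V /\ open (tX X) W /\ W y /\ (forall z, K z -> V z -> W z -> False)
        /\ forall p, O p -> V (snd p)) \/
      (exists V W, open (tX X) V /\ open (tX X) W /\ W x /\ (forall z, K z -> V z -> W z -> False)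
        /\ forall p, GstarX X p -> O p -> V (sact X (fst p) (snd p))))).
  destruct (HP F) as [l [Hl Hlc]].
  - intros O [H _]; exact H.
  - intros [g b] [Hgb [Ka Kb]]. unfold Theta in Ka, Kb; simpl in Ka, Kb, Hgb. unfold GstarX in Hgb; simpl in Hgb.
    destruct (classic (b = y)) as [Eb|Nb].
    + subst b. assert (Na : sact X g y <> x).
      { intro E. apply Hne. rewrite <- E. apply orbit_act; auto. }
      destruct (HH _ _ Ka Kx Na) as [V [W [HV [HW [Va [Wx Hd]]]]]].
      destruct (sact_cont HV) as [O [HO HOe]].
      exists O. split.
      * split; auto. right. exists V, W. repeat split; auto.
        intros p Hp Op. apply (HOe p Hp); auto.
      * apply (HOe (g, y)); auto.
    + destruct (HH _ _ Kb Ky Nb) as [V [W [HV [HW [Vb [Wy Hd]]]]]].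
      exists (fun p : gG G * sX X => V (snd p)). split.
      * split.
        -- intros p Vp. exists (fun _ => True), V. repeat split; auto. apply open_full.
        -- left. exists V, W. repeat split; auto.
      * exact Vb.
  - assert (Hind : forall l, (forall O, In O l -> F O) ->
       exists A B, open (tX X) A /\ open (tX X) B /\ A x /\ B y /\
         forall O, In O l -> forall p, GstarX X p -> O p -> K (sact X (fst p) (snd p)) -> K (snd p) ->
           A (sact X (fst p) (snd p)) -> B (snd p) -> False).
    { induction l0 as [|O l0 IH]; intros Hl0.
      - exists (fun _ => True), (fun _ => True). repeat split; try apply open_full. intros O [].
      - destruct IH as [A [B [HA [HB [Ax [By Hd]]]]]]. { intros; apply Hl0; simpl; auto. }
        destruct (Hl0 O (or_introl eq_refl)) as [_ [[V [W [HV [HW [Wy [HVW HO]]]]]] | [V [W [HV [HW [Wx [HVW HO]]]]]]]].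
        + exists A, (fun z => B z /\ W z). repeat split; auto; try (apply open_inter; auto).
          intros O' [<-|HO'] p Hp Op Ka Kb Aa [Bb Wb]; eauto.
        + exists (fun z => A z /\ W z), B. repeat split; auto; try (apply open_inter; auto).
          intros O' [<-|HO'] p Hp Op Ka Kb [Aa Wa] Bb; eauto. }
    destruct (Hind l Hl) as [A [B [HA [HB [Ax [By Hd]]]]]].
    exists (image (orbit_map X) (fun z => A z /\ U z)), (image (orbit_map X) (fun z => B z /\ U z)).
    split; [apply saturation_open; auto; apply open_inter; auto|].
    split; [apply saturation_open; auto; apply open_inter; auto|].
    split; [exists x; auto|]. split; [exists y; auto|].
    intros z _ [a [[Aa Ua] Ea]] [b [[Bb Ub] Eb]].
    rewrite <- Eb in Ea. destruct (orbit_eq X a b Ea) as [g [Hg Eg]].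
    destruct (Hlc (g, b)) as [O [InO Op]].
    + split; [exact Hg|]. unfold Theta; simpl. rewrite Eg. auto.
    + apply (Hd O InO (g, b) Hg Op); simpl; rewrite ?Eg; auto.
Qed.

Theorem mainTheorem3 (G : groupoid) (X : gspace G) :
  lclh_groupoid G ->
  loc_compact_loc_hausdorff (open (tX X)) ->
  proper_action X ->
  loc_compact_loc_hausdorff (quotient_open X) /\
  (forall C K : set (sX X),
     compact (open (tX X)) C ->
     nbhd (open (tX X)) K C -> compact (open (tX X)) K -> hausdorff (open (tX X)) K ->
     hausdorff (quotient_open X) (image (orbit_map X) C)).
Proof.
  intros HG HX Hpr. split.
  2:{ intros C K _; apply part2; auto. }
  intros S.
  assert (HS : exists x0, S = orbit_map X x0).
  { destruct S as [s [x0 Hs]]. exists x0. unfold orbit_map. apply sig_eq; auto. }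
  destruct HS as [x0 ->].
  destruct (HX x0) as [K [[U [HU [Ux UK]]] [HK HH]]].
  specialize (Ux x0 eq_refl).
  set (D := fun z => K z /\ ~ U z).
  assert (HD : compact (open (tX X)) D) by (apply compact_closed_sub; auto).
  destruct (sep_point_compact (tX X) K D x0 HH (UK _ Ux) HD) as [V [W [HV [HW [Vx [DW Hd]]]]]].
  { intros z [Kz _]; auto. } { intros [_ nU]; auto. }
  set (C := fun z => K z /\ ~ W z).
  assert (HC : compact (open (tX X)) C) by (apply compact_closed_sub; auto).
  exists (image (orbit_map X) C). split; [|split].
  - exists (image (orbit_map X) (fun z => V z /\ U z)). split; [apply saturation_open; auto; apply open_inter; auto|].
    split.
    + intros T ->. exists x0; auto.
    + intros T [z [[Vz Uz] <-]]. exists z. split; auto. split; auto. intro Wz. eapply Hd; eauto.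
  - apply (compact_image (open (tX X))); auto. intros O HO; exact HO.
  - apply (part2 G X HG Hpr C K); auto.
    exists U. split; auto. split; auto.
    intros z [Kz nW]. apply NNPP. intro nU. apply nW, DW. split; auto.
Qed.
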